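(* Let $p\ge1$ and $0<\nu\le1/2$. Then $$\sup_{0<y<(2+\nu/p^2)\,\omega_{p,\nu}}\left|\frac{1-y^{-1}P_{p,\nu}(y)}{P_{p,\nu}(y)}\right|\le\frac{\nu+1}{2\nu}.$$
   Context: $T_p$ denotes the Chebyshev polynomial of the first kind of degree $p$. $\delta_{p,\nu}:=1+\nu/p^2$, $\omega_{p,\nu}:=2T_p'(\delta_{p,\nu})/T_p(\delta_{p,\nu})$, and $P_{p,\nu}(x):=2\big(1-T_p(\delta_{p,\nu}-x/\omega_{p,\nu})/T_p(\delta_{p,\nu})\big)$. *)

(* Defs.v *)
From mathcomp Require Import all_boot all_order all_algebra.
From mathcomp Require Import reals.
Set Implicit Arguments. Unset Strict Implicit. Unset Printing Implicit Defensive.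
Import Order.TTheory GRing.Theory Num.Theory.
Local Open Scope ring_scope.

Section Cheb.
Variable R : realType.

Fixpoint cheb (n : nat) : {poly R} :=
  match n with
  | 0%N => 1
  | 1%N => 'X
  | (m.+1 as m').+1 => 2%:P * 'X * cheb m' - cheb m
  end.

Definition delta_pn (p : nat) (nu : R) : R := 1 + nu / (p%:R ^+ 2).

Definition omega_pn (p : nat) (nu : R) : R :=
  2 * (cheb p)^`().[delta_pn p nu] / (cheb p).[delta_pn p nu].

Definition P_pn (p : nat) (nu : R) (x : R) : R :=
  2 * (1 - (cheb p).[delta_pn p nu - x / omega_pn p nu] / (cheb p).[delta_pn p nu]).

End Cheb.

(* Main.v *)
Require Import Defs.
From mathcomp Require Import all_boot all_order all_algebra.
From mathcomp Require Import reals.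
From mathcomp Require Import ring lra.
Import Order.TTheory GRing.Theory Num.Theory.
Local Open Scope ring_scope.

Section S.
Variable R : realType.
Notation ch := (@cheb R).

Lemma chebSS n : ch n.+2 = 2%:P * 'X * ch n.+1 - ch n.
Proof. by []. Qed.

Definition e0 n (x : R) : R := (ch n).[x].
Definition e1 n (x : R) : R := (ch n)^`().[x].
Definition e2 n (x : R) : R := (ch n)^`()^`().[x].

Lemma e0SS n x : e0 n.+2 x = 2 * x * e0 n.+1 x - e0 n x.
Proof. by rewrite /e0 chebSS !hornerE. Qed.
Lemma e1SS n x : e1 n.+2 x = 2 * e0 n.+1 x + 2 * x * e1 n.+1 x - e1 n x.
Proof. rewrite /e1 /e0 chebSS !derivE !hornerE. ring. Qed.
Lemma e2SS n x : e2 n.+2 x = 4 * e1 n.+1 x + 2 * x * e2 n.+1 x - e2 n x.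
Proof. rewrite /e2 /e1 chebSS !derivE !hornerE /=. ring. Qed.
Lemma e00 x : e0 0 x = 1. Proof. by rewrite /e0 /= hornerE. Qed.
Lemma e01 x : e0 1 x = x. Proof. by rewrite /e0 /= hornerE. Qed.
Lemma e10 x : e1 0 x = 0. Proof. by rewrite /e1 /= derivE hornerE. Qed.
Lemma e11 x : e1 1 x = 1. Proof. by rewrite /e1 /= derivE hornerE. Qed.
Lemma e20 x : e2 0 x = 0. Proof. by rewrite /e2 /= !derivE hornerE. Qed.
Lemma e21 x : e2 1 x = 0. Proof. by rewrite /e2 /= !derivE hornerE. Qed.

Lemma pell (t : R) n : exists v : R, e0 n t ^+ 2 - (t ^+ 2 - 1) * v ^+ 2 = 1 /\
  e0 n.+1 t = t * e0 n t + (t ^+ 2 - 1) * v.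
Proof.
elim: n => [|n [v [h1 h2]]].
  by exists 0; rewrite e00 e01 expr0n /= mulr0 subr0 mulr1 addr0 expr1n.
exists (t * v + e0 n t); rewrite e0SS h2; split; last by ring.
by rewrite -[RHS]h1; ring.
Qed.

Lemma cheb_bnd t n : -1 <= t -> t <= 1 -> -1 <= e0 n t <= 1.
Proof.
move=> t1 t2; have [v [h1 _]] := pell t n.
have ht : t ^+ 2 <= 1 by nra.
have hv : 0 <= (1 - t ^+ 2) * v ^+ 2 by apply: mulr_ge0; [lra| exact: sqr_ge0].
have he : e0 n t ^+ 2 <= 1 by lra.
apply/andP; split; nra.
Qed.

Lemma at1 n : [/\ e0 n 1 = 1, e0 n.+1 1 = 1, e1 n 1 = n%:R ^+ 2 & e1 n.+1 1 = n.+1%:R ^+ 2].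
Proof.
elim: n => [|n [h1 h2 h3 h4]].
  by rewrite e00 e01 e10 e11 /=; split => //; rewrite ?expr0n // expr1n.
split => //.
  by rewrite e0SS h1 h2; ring.
rewrite e1SS h2 h3 h4 -!natr1; ring.
Qed.

Definition gam : R := 16 / 11.

Lemma seqb h p : 0 <= h -> h * p%:R ^+ 2 <= 1 / 2 -> forall n, (n <= p)%N ->
  e0 n (1 + h) <= 1 + 2 * h * n%:R ^+ 2 /\ e0 n.+1 (1 + h) - e0 n (1 + h) <= h * (1 + 4 * n%:R) /\
      e1 n (1 + h) <= 4 * n%:R ^+ 2 /\ e1 n.+1 (1 + h) - e1 n (1 + h) <= 4 * (2 * n%:R + 1) /\
      e2 n (1 + h) <= gam * n%:R ^+ 4 /\
      e2 n.+1 (1 + h) - e2 n (1 + h) <= gam * ((n%:R + 1) ^+ 4 - n%:R ^+ 4).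
Proof.
move=> h0 hp; set x := 1 + h; elim=> [|n IH] hn.
  rewrite e00 e01 e10 e11 e20 e21 /gam /x /=; repeat split; lra.
have [A0 [DA [B0 [DB [C0 DC]]]]] := IH (ltnW hn).
have hm : 0 <= (n%:R : R) by [].
have hmp : (n%:R + 1 : R) <= p%:R by rewrite natr1 ler_nat.
have hN : h * (n%:R + 1) ^+ 2 <= 1 / 2.
  apply: le_trans hp; apply: ler_wpM2l => //.
  by apply: lerXn2r => //; rewrite nnegrE ?ler0n //; lra.
rewrite -!natr1 e0SS e1SS e2SS.
move: A0 DA B0 DB C0 DC hN hm.
set m := (n%:R : R).
set a0 := e0 n x; set a1 := e0 n.+1 x; set b0 := e1 n x; set b1 := e1 n.+1 x.
set c0 := e2 n x; set c1 := e2 n.+1 x.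
move=> A0 DA B0 DB C0 DC hN hm.
have A1 : a1 <= 1 + 2 * h * (m + 1) ^+ 2 by nra.
have A2 : a1 <= 2 by lra.
have B1 : b1 <= 4 * (m + 1) ^+ 2 by nra.
have C1 : c1 <= gam * (m + 1) ^+ 4 by rewrite /gam in C0 DC *; nra.
have F1 : h * a1 <= h * 2 by apply: ler_wpM2l.
have F2 : h * b1 <= h * (4 * (m + 1) ^+ 2) by apply: ler_wpM2l.
have F3 : h * c1 <= h * (gam * (m + 1) ^+ 4) by apply: ler_wpM2l.
have F4 : h * (m + 1) ^+ 2 * (m + 1) ^+ 2 <= 1 / 2 * (m + 1) ^+ 2.
  by apply: ler_wpM2r => //; exact: sqr_ge0.
rewrite /x /gam in F3 C1 DC *; repeat split; nra.
Qed.

Definition nn (g : {poly R}) := forall i, 0 <= g`_i.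

Lemma nnD g k : nn g -> nn k -> nn (g + k).
Proof. by move=> a b i; rewrite coefD addr_ge0. Qed.
Lemma nnXM g : nn g -> nn ('X * g).
Proof. by move=> a [|i]; rewrite coefXM //=. Qed.
Lemma nnMn g m : nn g -> nn (g *+ m).
Proof. by move=> a i; rewrite coefMn mulrn_wge0. Qed.
Lemma nn_deriv g : nn g -> nn g^`().
Proof. by move=> a i; rewrite coef_deriv mulrn_wge0. Qed.
Lemma nn_split q c : nn (q * 'X + c%:P) -> nn q /\ 0 <= c.
Proof.
move=> h; split.
  by move=> i; have := h i.+1; rewrite coefD coefMX coefC /= addr0.
by have := h 0%N; rewrite coefD coefMX coefC /= add0r.
Qed.

Lemma nn_horner g a : nn g -> 0 <= a -> 0 <= g.[a].
Proof.
elim/poly_ind: g => [|q c IH] h ha; first by rewrite horner0.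
have [hq hc] := nn_split _ _ h.
rewrite hornerMXaddC; apply: addr_ge0 => //; apply: mulr_ge0 => //; exact: IH.
Qed.

Lemma nn_conv g a b : nn g -> 0 <= a -> a <= b ->
  g^`().[a] * (b - a) <= g.[b] - g.[a] /\ g.[b] - g.[a] <= g^`().[b] * (b - a).
Proof.
elim/poly_ind: g => [|q c IH] h ha hab.
  by rewrite deriv0 !horner0; lra.
have [hq hc] := nn_split _ _ h.
have [I1 I2] := IH hq ha hab.
have qa : 0 <= q^`().[a] by apply: nn_horner => //; exact: nn_deriv.
have qb : 0 <= q^`().[b] by apply: nn_horner => //; [exact: nn_deriv| lra].
rewrite derivMXaddC !hornerMXaddC !hornerE.
have P1 : 0 <= (q.[b] - q.[a] - q^`().[a] * (b - a)) * b by apply: mulr_ge0; lra.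
have P2 : 0 <= q^`().[a] * (b - a) * (b - a) by apply: mulr_ge0; [apply: mulr_ge0|]; lra.
have P3 : 0 <= (q^`().[b] * (b - a) - (q.[b] - q.[a])) * a by apply: mulr_ge0; lra.
have P4 : 0 <= q^`().[b] * (b - a) * (b - a) by apply: mulr_ge0; [apply: mulr_ge0|]; lra.
split; lra.
Qed.

Definition G n := ch n \Po ('X + 1%:P).

Lemma derivG (q : {poly R}) : (q \Po ('X + 1%:P))^`() = q^`() \Po ('X + 1%:P).
Proof. by rewrite deriv_comp !derivE addr0 mulr1. Qed.

Lemma G_ev n z : (G n).[z] = e0 n (z + 1).
Proof. by rewrite /G horner_comp !hornerE. Qed.
Lemma G_ev1 n z : (G n)^`().[z] = e1 n (z + 1).
Proof. by rewrite /G derivG horner_comp !hornerE. Qed.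
Lemma G_ev2 n z : (G n)^`()^`().[z] = e2 n (z + 1).
Proof. by rewrite /G !derivG horner_comp !hornerE. Qed.

Lemma nnG n : nn (G n) /\ nn (G n.+1 - G n).
Proof.
elim: n => [|n [h1 h2]].
  rewrite /G /= comp_polyX.
  have -> : (1 : {poly R}) \Po ('X + 1%:P) = 1 by rewrite -polyC1 comp_polyC.
  split => i; first by rewrite coef1; case: (i == 0)%N.
  by rewrite addrK coefX; case: (i == 1)%N.
have e : G n.+1 = G n + (G n.+1 - G n) by rewrite addrC subrK.
have hG1 : nn (G n.+1) by rewrite e; exact: nnD.
split => //.
have -> : G n.+2 - G n.+1 = (G n.+1 - G n) + 'X * (G n.+1 *+ 2).
  rewrite /G chebSS comp_polyB !comp_polyM comp_polyC comp_polyX.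
  rewrite -[2%:P]/((2%:R : R)%:P) polyC_natr. ring.
apply: nnD => //; apply: nnXM; exact: nnMn.
Qed.
End S.
Arguments e0 {R}. Arguments e1 {R}. Arguments e2 {R}. Arguments G {R}. Arguments nn {R}.
Arguments gam {R}.
Arguments pell {R}. Arguments cheb_bnd {R}. Arguments at1 {R}. Arguments seqb {R}.
Arguments nn_deriv {R}. Arguments nn_horner {R}. Arguments nn_conv {R}. Arguments nnG {R}.
Arguments G_ev {R}. Arguments G_ev1 {R}. Arguments G_ev2 {R}.

Lemma frac_le (R : realType) (a b c d : R) : 0 < b -> 0 < d -> a * d <= c * b -> a / b <= c / d.
Proof. by move=> hb hd h; rewrite ler_pdivrMr // mulrAC ler_pdivlMr. Qed.

Lemma inv_le (R : realType) (X K : R) : 0 < X -> 1 <= K * X -> X^-1 <= K.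
Proof. by move=> hx h; rewrite -div1r ler_pdivrMr. Qed.

Lemma Kle (R : realType) (nu X : R) : 0 < nu -> 2 * nu <= (nu + 1) * X -> 1 <= (nu + 1) / (2 * nu) * X.
Proof. move=> h0 h; rewrite mulrAC ler_pdivlMr ?mul1r //; lra. Qed.

Theorem lemmaA5 (R : realType) (p : nat) (nu : R) :
  (1 <= p)%N -> 0 < nu -> nu <= 1 / 2 ->
  forall y : R, 0 < y -> y < (2 + nu / (p%:R ^+ 2)) * omega_pn p nu ->
    `|(1 - y^-1 * P_pn p nu y) / P_pn p nu y| <= (nu + 1) / (2 * nu).
Proof.
move=> hp nu0 nu1 y y0 yl.
have P2pos : 0 < (p%:R : R) ^+ 2 by rewrite exprn_gt0 // ltr0n.
have hdef : nu / (p%:R ^+ 2) = nu / (p%:R ^+ 2) by [].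
move: yl; rewrite /P_pn /omega_pn /delta_pn.
move: P2pos; set P2 := (p%:R : R) ^+ 2 => P2pos.
set h := nu / P2.
have hP : h * P2 = nu by rewrite /h divfK // gt_eqF.
have h0 : 0 < h by rewrite /h divr_gt0.
have hP' : h * p%:R ^+ 2 <= 1 / 2 by rewrite -/P2 hP.
have [sA [_ [_ [_ [sC _]]]]] := seqb h p (ltW h0) hP' p (leqnn p).
have e4 : (p%:R : R) ^+ 4 = P2 ^+ 2 by rewrite /P2 -exprM.
rewrite -/P2 in sA; rewrite e4 in sC.
have nnGp := (@nnG R p).1.
set A := e0 p (1 + h) in sA; set C := e2 p (1 + h) in sC.
set B := e1 p (1 + h).
have GA : (G p).[h] = A by rewrite G_ev addrC.
have GB : (G p)^`().[h] = B by rewrite G_ev1 addrC.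
have GC : (G p)^`()^`().[h] = C by rewrite G_ev2 addrC.
have [a1 a2 a3 _] := @at1 R p.
have G0 : (G p).[0] = 1 :> R by rewrite G_ev add0r.
have G10 : (G p)^`().[0] = P2 by rewrite G_ev1 add0r.
have nnG1 := nn_deriv _ nnGp.
have nnG2 := nn_deriv _ nnG1.
have G200 := nn_horner _ 0 nnG2 (lexx 0).
have [c1 c2] := nn_conv _ _ _ nnGp (lexx 0) (ltW h0).
have [c3 _] := nn_conv _ _ _ nnG1 (lexx 0) (ltW h0).
rewrite GA GB G0 G10 subr0 in c1 c2 c3.
have Cnn : 0 <= C by rewrite -GC; exact: (nn_horner _ _ nnG2 (ltW h0)).
have Alow : 1 + nu <= A by nra.
have Aup : A <= 1 + 2 * nu by nra.
have Bge : P2 <= B by nra.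
have ABh : A - 1 <= B * h by lra.
have Apos : 0 < A by lra.
have Bpos : 0 < B by lra.
clear hdef a1 a2 a3 G0 c1 c2 c3 sA hP' e4.
rewrite -/(e0 p (1 + h)) -/(e1 p (1 + h)) -/A -/B.
set om := 2 * B / A.
have ompos : 0 < om by rewrite /om divr_gt0 // mulr_gt0.
move=> yl.
set t := 1 + h - y / om.
rewrite -/(e0 p t).
set E := e0 p t.
have hy : y = (1 + h - t) * om by rewrite /t opprB addrC subrK divfK // gt_eqF.
have yo : y / om < 2 + h by rewrite ltr_pdivrMr.
have yo0 : 0 < y / om by rewrite divr_gt0.
have tlo : -1 < t by rewrite /t; lra.
have thi : t < 1 + h by rewrite /t; lra.
set Pv := 2 * (1 - E / A).
set K := (nu + 1) / (2 * nu).
have PvE : Pv = 2 * (A - E) / A by rewrite /Pv; field; rewrite gt_eqF.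
have omE : om = 2 * B / A by [].
have nu2 : 0 < 2 * nu by lra.
case: (lerP t 1) => ht.
  have /andP [E1 E2] := cheb_bnd t p (ltW tlo) ht.
  rewrite -/E in E1 E2.
  have Pvpos : 0 < Pv by rewrite PvE divr_gt0 //; lra.
  have yA : 2 * (A - 1) <= y * A.
    rewrite hy omE mulrA divfK ?gt_eqF //.
    have : (1 - t) * B >= 0 by apply: mulr_ge0; lra.
    nra.
  have iP : Pv^-1 <= K.
    apply: inv_le => //; apply: Kle => //.
    rewrite PvE mulrA ler_pdivlMr //.
    have : (nu + 1) * (1 - E) >= 0 by apply: mulr_ge0; lra.
    nra.
  have iy : y^-1 <= K.
    apply: inv_le => //; apply: Kle => //.
    have : y * A * (nu + 1) >= 2 * (A - 1) * (nu + 1) by apply: ler_wpM2r; lra.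
    move=> H.
    have : 2 * nu * A <= (nu + 1) * y * A by nra.
    by rewrite ler_pM2r.
  have -> : (1 - y^-1 * Pv) / Pv = Pv^-1 - y^-1 by field; rewrite !gt_eqF.
  have : 0 < Pv^-1 by rewrite invr_gt0.
  have : 0 < y^-1 by rewrite invr_gt0.
  move=> *; rewrite ler_norml; apply/andP; split; lra.
set s := t - 1.
have s0 : 0 < s by rewrite /s; lra.
have sh : s <= h by rewrite /s; lra.
have GE : (G p).[s] = E by rewrite G_ev /s subrK.
set Bs := (G p)^`().[s].
have [d1 d2] := nn_conv _ _ _ nnGp (ltW s0) sh.
have [_ d4] := nn_conv _ _ _ nnG1 (ltW s0) sh.
have [d5 _] := nn_conv _ _ _ nnG1 (lexx 0) (ltW s0).
rewrite GA GE GB GC -/Bs in d1 d2 d4.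
rewrite G10 -/Bs subr0 in d5.
clear G10.
set u := 1 + h - t.
have hu : h - s = u by rewrite /s /u; ring.
rewrite hu in d1 d2 d4.
have u0 : 0 < u by rewrite /u; lra.
have Bs1 : P2 <= Bs.
  have : 0 <= (G p)^`()^`().[0] * s by apply: mulr_ge0 => //; lra.
  lra.
set D := A - E.
have D0 : P2 * u <= D.
  have : P2 * u <= Bs * u by apply: ler_wpM2r; lra.
  rewrite /D; lra.
have Dpos : 0 < D by have := mulr_gt0 P2pos u0; lra.
have -> : (1 - y^-1 * Pv) / Pv = A * (B * u - D) / (2 * D * B * u).
  rewrite /Pv hy omE -/u /D; field.
  by rewrite !gt_eqF //; apply/and4P; split => //; rewrite gt_eqF //; lra.
clear GA GB GC GE nnGp nnG1 nnG2 yl yo yo0 tlo thi hy omE ompos PvE hu ht Alow ABh.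
have X0 : 0 <= A * (B * u - D) / (2 * D * B * u).
  apply: divr_ge0; last by apply: ltW; rewrite !mulr_gt0 //.
  apply: mulr_ge0; [lra | rewrite /D; lra].
rewrite ler_norml; apply/andP; split.
  have : 0 <= K by rewrite /K divr_ge0 //; lra.
  lra.
apply: frac_le; first by rewrite !mulr_gt0 //.
  done.
have Q1 : B * u - D <= C * u ^+ 2.
  have : (B - Bs) * u <= C * u * u by apply: ler_wpM2r; lra.
  rewrite /D; lra.
have Q3 : nu * A * C <= (nu + 1) * P2 ^+ 2.
  have g1 : nu * A * C <= nu * (1 + 2 * nu) * C.
    by apply: ler_wpM2r => //; apply: ler_wpM2l; lra.
  have g2 : nu * (1 + 2 * nu) * C <= nu * (1 + 2 * nu) * (gam * P2 ^+ 2).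
    by apply: ler_wpM2l => //; apply: mulr_ge0; lra.
  have g0 : nu * nu <= nu * (1 / 2) by apply: ler_wpM2l; lra.
  have g3 : nu * (1 + 2 * nu) * gam <= nu + 1 by rewrite /gam; lra.
  have g4 := ler_wpM2r (sqr_ge0 P2) g3.
  lra.
have Q4 : P2 ^+ 2 * u ^+ 2 <= D * B * u.
  have H : P2 * u * P2 <= D * B.
    by apply: ler_pM; [apply: mulr_ge0; lra | lra | lra | lra].
  have := ler_wpM2r (ltW u0) H. lra.
have Q5 : nu * A * C * u ^+ 2 <= (nu + 1) * P2 ^+ 2 * u ^+ 2.
  by apply: ler_wpM2r => //; apply: sqr_ge0.
have Q6 : (nu + 1) * (P2 ^+ 2 * u ^+ 2) <= (nu + 1) * (D * B * u).
  by apply: ler_wpM2l => //; lra.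
have Q7 : nu * (A * (B * u - D)) <= nu * (A * (C * u ^+ 2)).
  by apply: ler_wpM2l; [lra | apply: ler_wpM2l; lra].
lra.
Qed.
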